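(* Let $X$ be a compact Hausdorff space and $A\subset X$ a nonempty finite subset. Then $\pi_n^M(X,A)=0$ for all $n>0$.
   Context: A continuous multivalued map $X\to Y$ is a subset $T\subset X\times Y$ such that the restriction of the projection $X\times Y\to X$ to $T$ is proper (universally closed), surjective and has finite fibers; $M(X,Y)$ is the set of these. $S_*^M(X)$ is the simplicial set with $S_n^M(X)=M(\Delta_n,X)$ ($\Delta_n$ the standard topological $n$-simplex), with face and degeneracy maps $\alpha\mapsto\alpha\circ\mathrm{gr}(f)=\{(s,x):(f(s),x)\in\alpha\}$ for $f$ the standard coface and codegeneracy maps; it is a Kan complex. Elements of $S_0^M(X)$ are identified with nonempty finite subsets of $X$. The multivalued homotopy groups are $\pi_n^M(X,A)=\pi_n(S_*^M(X),A)$, the simplicial homotopy groups at the vertex $A$. *)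

(* Defs.v *)
From HB Require Import structures.
From mathcomp Require Import all_boot all_order all_algebra.
From mathcomp Require Import all_classical all_reals all_analysis.
From mathcomp Require Import Rstruct Rstruct_topology.
Set Implicit Arguments. Unset Strict Implicit. Unset Printing Implicit Defensive.
Import Order.TTheory GRing.Theory Num.Theory.
Local Open Scope classical_set_scope.
Local Open Scope ring_scope.

Notation RR := Rdefinitions.R.

Definition pt (n : nat) := 'rV[RR]_(n.+1).

Definition simplex (n : nat) : set (pt n) :=
  [set s | (forall j, 0 <= s ord0 j) /\ \sum_j s ord0 j = 1].
Arguments simplex n : clear implicits.

Definition coface (n : nat) (i : 'I_(n.+2)) (s : pt n) : pt n.+1 :=
  \row_(j < n.+2) (if (j < i)%N then s ord0 (inord j)
                   else if (j == i :> nat) then 0 else s ord0 (inord j.-1)).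

Definition codegen (n : nat) (i : 'I_(n.+1)) (t : pt n.+1) : pt n :=
  \row_(j < n.+1) (if (j < i)%N then t ord0 (inord j)
                   else if (j == i :> nat) then t ord0 (inord j) + t ord0 (inord j.+1)
                   else t ord0 (inord j.+1)).

Section MV.
Variable X : topologicalType.

(* Candidate n-simplices: subsets of Δ_n × X (as subsets of R^(n+1) × X). *)
Definition mset (n : nat) := set (pt n * X).

Definition closed_map_on (S S' : topologicalType) (A : set S) (B : set S')
    (f : S -> S') : Prop :=
  forall K : set S, closed K -> exists K' : set S', closed K' /\
    f @` (A `&` K) = B `&` K'.

Definition proj_universally_closed (n : nat) (T : mset n) : Prop :=
  forall Z : topologicalType,
    closed_map_on (T `*` [set: Z]) (simplex n `*` [set: Z])
      (fun tz : (pt n * X) * Z => (tz.1.1, tz.2)).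

(* Continuous multivalued maps Δ_n -> X: the projection restricted to T is
   proper (universally closed), surjective onto Δ_n and has finite fibers. *)
Definition mvmap (n : nat) (T : mset n) : Prop :=
  [/\ T `<=` simplex n `*` [set: X],
      proj_universally_closed T,
      (forall s, simplex n s -> exists x, T (s, x)) &
      (forall s, simplex n s -> finite_set [set x | T (s, x)])].

Definition face (n : nat) (i : 'I_(n.+2)) (a : mset n.+1) : mset n :=
  [set sx | simplex n sx.1 /\ a (coface i sx.1, sx.2)].

Definition degen (n : nat) (i : 'I_(n.+1)) (a : mset n) : mset n.+1 :=
  [set sx | simplex n.+1 sx.1 /\ a (codegen i sx.1, sx.2)].

Definition vertex (A : set X) : mset 0 := [set sx | simplex 0 sx.1 /\ A sx.2].

Fixpoint base (A : set X) (n : nat) : mset n :=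
  match n with
  | 0 => vertex A
  | k.+1 => degen ord0 (@base A k)
  end.
Arguments base A n : clear implicits.

(* Elements of π_(m+1)(S^M_*(X), A): (m+1)-simplices all of whose faces are
   the base point. *)
Definition sphere (A : set X) (m : nat) (a : mset m.+1) : Prop :=
  mvmap a /\ forall i : 'I_(m.+2), face i a = base A m.

(* Simplicial homotopy (rel. boundary, for Kan complexes, as in May):
   a ~ b iff there is an (n+1)-simplex z with d_n z = a, d_(n+1) z = b and
   d_i z = base for i < n. *)
Definition shomotopic (A : set X) (m : nat) (a b : mset m.+1) : Prop :=
  exists z : mset m.+2, mvmap z /\
    face (inord m.+1) z = a /\ face (inord m.+2) z = b /\
    forall i : 'I_(m.+3), (i < m.+1)%N -> face i z = base A m.+1.

Definition pi_trivial (A : set X) (n : nat) : Prop :=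
  match n with
  | 0 => True
  | m.+1 => forall a : mset m.+1, sphere A a -> shomotopic A a (base A m.+1)
  end.

End MV.

(* Main.v *)
Require Import Defs.
From mathcomp Require Import all_boot all_classical all_analysis.
From mathcomp Require Import all_order all_algebra all_reals Rstruct Rstruct_topology.
Import Order.TTheory GRing.Theory Num.Theory.
Local Open Scope classical_set_scope.
Local Open Scope ring_scope.
Set Implicit Arguments. Unset Strict Implicit.

Lemma ordE n (o : 'I_n.+1) k : k = val o -> inord k = o.
Proof. by move=> ->; rewrite inord_val. Qed.

Lemma coface_lift n (i : 'I_n.+2) (s : pt n) (j : 'I_n.+1) :
  coface i s ord0 (lift i j) = s ord0 j.
Proof.
rewrite mxE /= /bump; case: (ltnP j i) => h.
  by rewrite add0n h inord_val.
rewrite add1n.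
have -> : (j.+1 < i)%N = false by apply/negbTE; rewrite -leqNgt leqW.
have -> : (j.+1 == i :> nat) = false by apply/negbTE; rewrite neq_ltn ltnS h orbT.
by rewrite /= inord_val.
Qed.

Lemma coface_i n (i : 'I_n.+2) (s : pt n) : coface i s ord0 i = 0.
Proof. by rewrite mxE ltnn eqxx. Qed.

Lemma simplex_coface n (i : 'I_n.+2) (s : pt n) :
  simplex n s -> simplex n.+1 (coface i s).
Proof.
move=> [s0 s1]; split.
  by move=> j; case: (unliftP i j) => [k ->|->]; rewrite ?coface_lift ?coface_i.
rewrite (bigD1_ord i) //= coface_i add0r.
by under eq_bigr do rewrite coface_lift.
Qed.

Lemma codegenE n (i : 'I_n.+1) (t : pt n.+1) (j : 'I_n.+1) :
  codegen i t ord0 j = t ord0 (lift (lift ord0 i) j) +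
    (if j == i then t ord0 (lift ord0 i) else 0).
Proof.
rewrite mxE /= /bump /=.
case: (ltngtP j i) => h.
- case: eqP => [e|_]; first by move: h; rewrite e ltnn.
  rewrite addr0; congr (t ord0 _); apply: val_inj => /=.
  rewrite /bump /= inordK; last by rewrite (leq_trans (ltn_ord j)).
  by rewrite add1n leqNgt ltnS (ltnW h).
- case: eqP => [e|_]; first by move: h; rewrite e ltnn.
  rewrite addr0; congr (t ord0 _); apply: val_inj => /=.
  rewrite /bump /= inordK; last by rewrite ltnS.
  by rewrite add1n h.
- have e : j = i by apply: val_inj.
  rewrite e eqxx; congr (t ord0 _ + t ord0 _); apply: val_inj => /=.
    rewrite /bump /= inordK; last by rewrite (leq_trans (ltn_ord i)).
    by rewrite add1n ltnn.
  by rewrite inordK // ltnS.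
Qed.

Lemma simplex_codegen n (i : 'I_n.+1) (t : pt n.+1) :
  simplex n.+1 t -> simplex n (codegen i t).
Proof.
move=> [t0 t1]; split.
  move=> j; rewrite codegenE; apply: addr_ge0 => //.
  by case: ifP.
under eq_bigr do rewrite codegenE.
rewrite big_split /= -big_mkcond /= big_pred1_eq.
by rewrite -t1 (bigD1_ord (lift ord0 i)) //= addrC.
Qed.

Definition del n (i : 'I_n.+2) (u : pt n.+1) : pt n := \row_j u ord0 (lift i j).

Lemma coface_del n (i : 'I_n.+2) (u : pt n.+1) :
  u ord0 i = 0 -> coface i (del i u) = u.
Proof.
move=> ui; apply/rowP => k.
case: (unliftP i k) => [j ->|->]; last by rewrite coface_i ui.
by rewrite coface_lift mxE.
Qed.

Lemma simplex_del n (i : 'I_n.+2) (u : pt n.+1) :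
  simplex n.+1 u -> u ord0 i = 0 -> simplex n (del i u).
Proof.
move=> [u0 u1] ui; split; first by move=> j; rewrite mxE.
move: u1; rewrite (bigD1_ord i) //= ui add0r => <-.
by apply: eq_bigr => j _; rewrite mxE.
Qed.

Lemma baseE (X : topologicalType) (A : set X) (n : nat) (s : pt n) (x : X) :
  @base X A n (s, x) <-> simplex n s /\ A x.
Proof.
elim: n s => [|n IH] s //=.
rewrite /degen /=; split.
  by move=> [ss /IH [_ ax]].
by move=> [ss ax]; split => //; apply/IH; split => //; exact: simplex_codegen.
Qed.

Lemma bdry (X : topologicalType) (A : set X) n (a : @Defs.mset X n.+1)
  (i : 'I_n.+2) (u : pt n.+1) (x : X) :
  face i a = @base X A n -> simplex n.+1 u -> u ord0 i = 0 -> (a (u, x) <-> A x).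
Proof.
move=> fa su ui.
have sd := simplex_del su ui.
have e : face i a (del i u, x) <-> @base X A n (del i u, x) by rewrite fa.
rewrite baseE /face /= coface_del // in e.
split => h; first by case: (e.1 (conj sd h)).
by case: (e.2 (conj sd h)).
Qed.

Lemma fst_cont (A B : topologicalType) : continuous (@fst A B).
Proof. move=> [a b]; exact: cvg_fst. Qed.
Lemma snd_cont (A B : topologicalType) : continuous (@snd A B).
Proof. move=> [a b]; exact: cvg_snd. Qed.
Lemma pair_cont (Y A B : topologicalType) (f : Y -> A) (g : Y -> B) :
  continuous f -> continuous g -> continuous (fun y => (f y, g y)).
Proof. move=> fc gc y; exact: cvg_pair (fc y) (gc y). Qed.
Lemma closed_eqfun (Y : topologicalType) (n : nat) (g h : Y -> pt n) :
  continuous g -> continuous h -> closed [set y | g y = h y].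
Proof.
move=> gc hc.
have -> : [set y | g y = h y] = (fun y => g y - h y) @^-1` [set 0].
  apply/seteqP; split => y /=; first by move=> ->; rewrite subrr.
  by move/eqP; rewrite subr_eq0 => /eqP.
apply: preimage_closed.
  by move=> y _; apply: continuousB; [exact: gc|exact: hc].
apply: accessible_closed_set1; apply: hausdorff_accessible.
exact: norm_hausdorff.
Qed.

Lemma comp_uc (X : topologicalType) k n (T : @Defs.mset X n) (f : pt k -> pt n)
  (S : set (pt k)) :
  proj_universally_closed T -> continuous f -> closed S ->
  (forall t, simplex k t -> S t -> simplex n (f t)) ->
  proj_universally_closed
    ([set tx | (simplex k tx.1 /\ S tx.1) /\ T (f tx.1, tx.2)] : @Defs.mset X k).
Proof.
move=> Tuc fc Scl fS Z K Kcl.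
pose Kt : set ((pt n * X) * (pt k * Z)) :=
  [set p | p.1.1 = f p.2.1 /\ K ((p.2.1, p.1.2), p.2.2)].
have Ktcl : closed Kt.
  apply: closedI.
    apply: (@closed_eqfun _ n (fun p : (pt n * X) * (pt k * Z) => p.1.1)
                               (fun p => f p.2.1)).
      by move=> p; apply: continuous_comp; [exact: fst_cont|exact: fst_cont].
    move=> p; apply: continuous_comp; last exact: fc.
    by apply: continuous_comp; [exact: snd_cont|exact: fst_cont].
  apply: (@preimage_closed _ _ (fun p : (pt n * X) * (pt k * Z) =>
                                ((p.2.1, p.1.2), p.2.2))) => //.
  move=> p _; apply: pair_cont; last first.
    by move=> q; apply: continuous_comp; [exact: snd_cont|exact: snd_cont].
  apply: pair_cont.
    by move=> q; apply: continuous_comp; [exact: snd_cont|exact: fst_cont].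
  by move=> q; apply: continuous_comp; [exact: fst_cont|exact: snd_cont].
have [K'' [K''cl HK'']] := Tuc _ Kt Ktcl.
exists [set q : pt k * Z | S q.1 /\ K'' (f q.1, q)]; split.
  apply: closedI.
    apply: (@preimage_closed _ _ fst) => //.
    by move=> q _; exact: fst_cont.
  apply: (@preimage_closed _ _ (fun q : pt k * Z => (f q.1, q))) => //.
  move=> q _; apply: pair_cont; last by move=> r.
  by move=> r; apply: continuous_comp; [exact: fst_cont|exact: fc].
apply/seteqP; split.
  move=> _ [[[t x] w] [[[[st St] Tfx] _] Ktxw] <-] /=.
  split; first by split.
  split => //.
  have : ((simplex n `*` setT) `&` K'') (f t, (t, w)).
    rewrite -HK''; exists ((f t, x), (t, w)) => //.
  by case.
move=> [t w] [[st _] [St K''tw]] /=.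
have : ((simplex n `*` setT) `&` K'') (f t, (t, w)).
  by split => //; split => //; exact: fS.
rewrite -HK'' => -[[[u x] [t' w']] [[Tux _] [/= eu Kx]]] [eu' et ew].
subst.
by exists ((t, x), w).
Qed.

Lemma mx_entry_cont (T : topologicalType) p q (i : 'I_p) (j : 'I_q) :
  continuous (fun M : 'M[T]_(p,q) => M i j).
Proof.
move=> M A /= nA.
exists (fun i' j' => if (i' == i) && (j' == j) then A else setT).
  hnf; move=> i' j' /=; case: eqP => [->|_]; [case: eqP => [->|_] |] => //=; exact: filterT.
by move=> N /= /(_ i j); rewrite !eqxx.
Qed.

Lemma mx_cont (Y T : topologicalType) p q (f : Y -> 'M[T]_(p,q)) :
  (forall i j, continuous (fun y => f y i j)) -> continuous f.
Proof.
move=> fc y B /= [P nP sPB].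
have : \forall s \near y, forall i j, P i j (f s i j).
  apply: filter_forall => i; apply: filter_forall => j.
  exact: (fc i j y _ (nP i j)).
by apply: filterS => s Hs; apply: sPB.
Qed.

Lemma entry_cont n (j : 'I_n.+1) : continuous (fun t : pt n => t ord0 j).
Proof. exact: mx_entry_cont. Qed.

Lemma add_entry_cont n (p q : 'I_n.+1) :
  continuous (fun t : pt n => t ord0 p + t ord0 q).
Proof.
move=> t.
have h : {for t, continuous (fun t : pt n => (t ord0 p : RR^o) + (t ord0 q : RR^o))}.
  apply: continuousD; [exact (@entry_cont n p t) | exact (@entry_cont n q t)].
exact h.
Qed.

Lemma codegen_cont n (i : 'I_n.+1) : continuous (@codegen n i).
Proof.
apply: mx_cont => r j; rewrite (ord1 r).
have -> : (fun t => codegen i t 0 j) = (fun t : pt n.+1 => t ord0 (lift (lift ord0 i) j) +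
    (if j == i then t ord0 (lift ord0 i) else 0)).
  by apply: funext => t; rewrite codegenE.
case: (j == i).
  exact: add_entry_cont.
have -> : (fun t : pt n.+1 => t ord0 (lift (lift ord0 i) j) + 0) =
          (fun t => t ord0 (lift (lift ord0 i) j)) by apply: funext => t; rewrite addr0.
exact: entry_cont.
Qed.

Lemma coface_cont n (i : 'I_n.+2) : continuous (@coface n i).
Proof.
apply: mx_cont => r j; rewrite (ord1 r).
have -> : (fun t => coface i t 0 j) = (fun t : pt n => if (j < i)%N then t ord0 (inord j)
                   else if (j == i :> nat) then 0 else t ord0 (inord j.-1)).
  by apply: funext => t; rewrite mxE.
case: (j < i)%N; first exact: entry_cont.
case: (j == i :> nat); first exact: cst_continuous.
exact: entry_cont.
Qed.

Lemma closed_S n (p q : 'I_n.+1) : closed [set t : pt n | t ord0 p <= t ord0 q].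
Proof.
have -> : [set t : pt n | t ord0 p <= t ord0 q] =
   (fun t : pt n => t ord0 q - t ord0 p) @^-1` [set x | 0 <= x].
  by apply/seteqP; split => t /=; rewrite subr_ge0.
apply: preimage_closed; last exact: closed_ge.
move=> t _.
have h : {for t, continuous (fun t : pt n => (t ord0 q : RR^o) - (t ord0 p : RR^o))}.
  apply: continuousB; [exact (@entry_cont n q t) | exact (@entry_cont n p t)].
exact h.
Qed.

Lemma union_uc (X : topologicalType) n (T1 T2 : @Defs.mset X n) :
  proj_universally_closed T1 -> proj_universally_closed T2 ->
  proj_universally_closed (T1 `|` T2).
Proof.
move=> h1 h2 Z K Kcl.
have [K1 [c1 e1]] := h1 Z K Kcl; have [K2 [c2 e2]] := h2 Z K Kcl.
exists (K1 `|` K2); split; first exact: closedU.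
rewrite setIUr -e1 -e2; apply/seteqP; split.
  move=> _ [[tx w] [[[T1t|T2t] _] Kt] <-].
    by left; exists (tx, w).
  by right; exists (tx, w).
move=> _ [[[tx w] [[T1t _] Kt] <-]|[[tx w] [[T2t _] Kt] <-]].
  by exists (tx, w) => //; split => //; split => //; left.
by exists (tx, w) => //; split => //; split => //; right.
Qed.

Lemma coface_val n (i : 'I_n.+2) (s : pt n) k : (k < n.+2)%N ->
  coface i s ord0 (inord k) =
  if (k < i)%N then s ord0 (inord k) else if k == i :> nat then 0 else s ord0 (inord k.-1).
Proof. by move=> kn; rewrite mxE inordK. Qed.

Lemma codegen_coface n (i : 'I_n.+1) (i' : 'I_n.+2) (s : pt n) :
  val i' = val i -> codegen i (coface i' s) = s.
Proof.
move=> ii; apply/rowP => j; rewrite mxE.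
case: (ltngtP j i) => h.
- rewrite coface_val; last by rewrite (leq_trans (ltn_ord j)).
  by rewrite ii h inord_val.
- rewrite coface_val; last by rewrite ltnS.
  rewrite ii.
  have -> : (j.+1 < i)%N = false by apply/negbTE; rewrite -leqNgt ltnW // ltnW.
  have -> : (j.+1 == i :> nat) = false by apply/negbTE; rewrite neq_ltn ltnS (ltnW h) orbT.
  by rewrite /= inord_val.
- rewrite !coface_val; last first.
  + by rewrite (leq_trans (ltn_ord j)).
  + by rewrite ltnS.
  rewrite ii h ltnn eqxx.
  have -> : (i.+1 < i)%N = false by apply/negbTE; rewrite -leqNgt leqnSn.
  have -> : (i.+1 == i :> nat) = false by apply/negbTE; rewrite neq_ltn ltnSn orbT.
  by rewrite add0r /= -h inord_val.
Qed.

Theorem mainTheorem11 (X : topologicalType)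
  (hcomp : compact [set: X]) (hhaus : hausdorff_space X)
  (A : set X) (hfin : finite_set A) (hne : exists a, A a) :
  forall n : nat, (0 < n)%N -> pi_trivial A n.
Proof.
move=> [//|m] _ a [[asub auc asurj afin] aface].
pose g1 : pt m.+2 -> pt m.+1 := codegen (ord_max : 'I_m.+2).
pose g2 : pt m.+2 -> pt m.+1 :=
  fun t => coface (ord_max : 'I_m.+2) (codegen (ord_max : 'I_m.+1) (g1 t)).
pose p1 : 'I_m.+3 := inord m.+1.
pose p2 : 'I_m.+3 := inord m.+2.
have vp1 : val p1 = m.+1 by rewrite /= inordK.
have vp2 : val p2 = m.+2 by rewrite /= inordK.
pose S1 := [set t : pt m.+2 | t ord0 p1 <= t ord0 p2].
pose S2 := [set t : pt m.+2 | t ord0 p2 <= t ord0 p1].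
pose Z1 : Defs.mset X m.+2 :=
  [set tx | (simplex m.+2 tx.1 /\ S1 tx.1) /\ a (g1 tx.1, tx.2)].
pose Z2 : Defs.mset X m.+2 :=
  [set tx | (simplex m.+2 tx.1 /\ S2 tx.1) /\ a (g2 tx.1, tx.2)].
have sg1 t : simplex m.+2 t -> simplex m.+1 (g1 t) by exact: simplex_codegen.
have sg2 t : simplex m.+2 t -> simplex m.+1 (g2 t).
  by move=> st; apply: simplex_coface; apply: simplex_codegen; exact: sg1.
have hA t x : simplex m.+2 t -> (a (g2 t, x) <-> A x).
  by move=> st; exact: (bdry x (aface ord_max) (sg2 t st) (coface_i _ _)).
have hz t x : (Z1 `|` Z2) (t, x) <->
    simplex m.+2 t /\ ((S1 t /\ a (g1 t, x)) \/ (S2 t /\ A x)).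
  split.
    by case=> -[[st S] h]; split=> //; [left|right; split => //; apply/(hA t x st)].
  move=> [st [[S h]|[S h]]]; [left|right] => //; split => //; exact/(hA t x st).
have ge0 s j : simplex m.+1 s -> 0 <= s ord0 j by case=> h _.
have hface (i : 'I_m.+3) s x : face i (Z1 `|` Z2) (s, x) <-> simplex m.+1 s /\
   ((S1 (coface i s) /\ a (g1 (coface i s), x)) \/ (S2 (coface i s) /\ A x)).
  rewrite /face /=; split.
    by move=> [ss /hz [_ h]].
  by move=> [ss h]; split => //; apply/hz; split => //; exact: simplex_coface.
have cp1p2 s : coface p1 s ord0 p2 = s ord0 ord_max.
  rewrite mxE vp1 vp2.
  have -> : (m.+2 < m.+1)%N = false by rewrite ltnNge leqnSn.
  by rewrite gtn_eqF //=; congr (s ord0 _); apply: val_inj; rewrite /= inordK.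
have cp2p1 s : coface p2 s ord0 p1 = s ord0 ord_max.
  rewrite mxE vp1 vp2 ltnSn.
  by congr (s ord0 _); apply: val_inj; rewrite /= inordK.
have g1max t : g1 t ord0 ord_max = t ord0 p1 + t ord0 p2.
  by rewrite mxE /= ltnn eqxx.
have ge0t t j : simplex m.+2 t -> 0 <= t ord0 j by case=> h _.
exists (Z1 `|` Z2); split; [|split; [|split]].
- split.
  + by move=> [t x] /hz [st _]; split.
  + apply: union_uc; apply: comp_uc => //.
    * exact: codegen_cont.
    * exact: closed_S.
    * by move=> t st _; exact: sg1.
    * move=> t.
      have h1 : {for t, continuous (fun t => codegen (ord_max : 'I_m.+1) (g1 t))}.
        exact: (@continuous_comp _ _ _ g1 (codegen (ord_max : 'I_m.+1)) t
                  (@codegen_cont _ _ t) (@codegen_cont _ _ _)).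
      exact: (@continuous_comp _ _ _ (fun t => codegen (ord_max : 'I_m.+1) (g1 t))
                  (coface (ord_max : 'I_m.+2)) t h1 (@coface_cont _ _ _)).
    * exact: closed_S.
    * by move=> t st _; exact: sg2.
  + move=> t st; case/orP: (le_total (t ord0 p1) (t ord0 p2)) => h.
      have [x hx] := asurj _ (sg1 t st).
      by exists x; apply/hz; split => //; left; split.
    have [y hy] := hne.
    by exists y; apply/hz; split => //; right; split.
  + move=> t st.
    apply: (@sub_finite_set _ _ ([set x | a (g1 t, x)] `|` A)).
      by move=> x /hz [_ [[_ h]|[_ h]]]; [left|right].
    by rewrite finite_setU; split => //; exact: afin (sg1 t st).
- apply/seteqP; split => -[s x].
  + move=> /hface [ss [[_ h]|[S h]]].
      by rewrite /g1 (@codegen_coface m.+1 ord_max p1 s vp1) in h.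
    move: S; rewrite /S2 /= coface_i cp1p2 => S.
    have s0 : s ord0 ord_max = 0 by apply/le_anti; rewrite S ge0.
    exact/(bdry x (aface ord_max) ss s0).
  + move=> h; have ss : simplex m.+1 s by have [] := asub _ h.
    apply/hface; split => //; left; split.
      by rewrite /S1 /= coface_i cp1p2 ge0.
    by rewrite /g1 (@codegen_coface m.+1 ord_max p1 s vp1).
- apply/seteqP; split => -[s x].
  + move=> /hface [ss [[S h]|[_ h]]]; apply/baseE; split => //.
    move: S; rewrite /S1 /= coface_i cp2p1 => S.
    have s0 : s ord0 ord_max = 0 by apply/le_anti; rewrite S ge0.
    have st := simplex_coface p2 ss.
    apply/(bdry x (aface ord_max) (sg1 _ st)) => //.
    by rewrite g1max cp2p1 coface_i s0 addr0.
  + move=> /baseE [ss ax]; apply/hface; split => //; right; split => //.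
    by rewrite /S2 /= coface_i cp2p1 ge0.
- move=> i ilt; apply/seteqP; split => -[s x].
  + move=> /hface [ss [[_ h]|[_ h]]]; apply/baseE; split => //.
    have st := simplex_coface i ss.
    apply/(bdry x (aface (inord i)) (sg1 _ st)) => //.
    rewrite mxE /= inordK; last exact: (leq_trans ilt).
    rewrite ilt; have -> : (inord i : 'I_m.+3) = i by rewrite inord_val.
    exact: coface_i.
  + move=> /baseE [ss ax]; apply/hface; split => //.
    have st := simplex_coface i ss.
    case/orP: (le_total (coface i s ord0 p1) (coface i s ord0 p2)) => S; [left|right]; split => //.
    apply/(bdry x (aface (inord i)) (sg1 _ st)) => //.
    rewrite mxE /= inordK; last exact: (leq_trans ilt).
    rewrite ilt; have -> : (inord i : 'I_m.+3) = i by rewrite inord_val.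
    exact: coface_i.
Qed.
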